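(* Let $r,a,b\in\mathbb{N}$ with $b\ge2$ and $a=b(b-1)$. Then for any $\varepsilon>0$ and any completely multiplicative functions $f_1,\ldots,f_r:\mathbb{N}\to\mathbb{S}^1$, the set $$\mathcal{A}_{a,b,a,b-1}(f_1,\ldots,f_r;\varepsilon):=\{n\in\mathbb{N}: |f_j(an+b)-f_j(an+b-1)|<\varepsilon \text{ for all } 1\le j\le r\}$$ has positive lower asymptotic density.
   Context: $\mathbb{N}=\{1,2,\dots\}$, $\mathbb{S}^1$ the unit circle; completely multiplicative means $f(mn)=f(m)f(n)$. The lower asymptotic density of $A\subseteq\mathbb{N}$ is $\underline{d}(A)=\liminf_{N\to\infty}|A\cap\{1,\dots,N\}|/N$. *)

(* Defs.v *)
From Stdlib Require Import Reals ClassicalEpsilon.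
From Coquelicot Require Import Coquelicot.
Open Scope R_scope.

Definition completely_multiplicative (f : nat -> C) : Prop :=
  forall m n : nat, (1 <= m)%nat -> (1 <= n)%nat -> f (m * n)%nat = Cmult (f m) (f n).

Definition unit_circle_valued (f : nat -> C) : Prop :=
  forall n : nat, (1 <= n)%nat -> Cmod (f n) = 1.

Definition indic (P : nat -> Prop) (n : nat) : R :=
  if excluded_middle_informative (P n) then 1 else 0.

Fixpoint count_upto (P : nat -> Prop) (N : nat) : R :=
  match N with
  | O => 0
  | S k => count_upto P k + indic P (S k)
  end.

Definition lower_density (P : nat -> Prop) : Rbar :=
  LimInf_seq (fun N => count_upto P N / INR N).

(* Main.v *)
Require Import Defs.
From Stdlib Require Import Reals Lra Lia ZArith Znumtheory Arith ClassicalEpsilon.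
From Coquelicot Require Import Coquelicot.

Open Scope Z_scope.

Notation zp := Zpower_nat.

Lemma zp_S x n : zp x (S n) = x * zp x n.
Proof. reflexivity. Qed.

Lemma zp_add x n m : zp x (n + m) = zp x n * zp x m.
Proof. apply Zpower_nat_is_exp. Qed.

Lemma zp_mul x n m : zp x (n * m) = zp (zp x n) m.
Proof.
  induction m as [|m IH]. rewrite Nat.mul_0_r; reflexivity.
  rewrite Nat.mul_succ_r, zp_add, IH, zp_S. ring.
Qed.

Lemma zp_mult x y n : zp (x * y) n = zp x n * zp y n.
Proof. induction n as [|n IH]; [reflexivity|]. rewrite !zp_S, IH. ring. Qed.

Lemma zp_one n : zp 1 n = 1.
Proof. induction n as [|n IH]; [reflexivity|]. rewrite zp_S, IH; ring. Qed.

Lemma zp_pos x n : 0 < x -> 0 < zp x n.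
Proof. intros H; induction n; [simpl; lia|]. rewrite zp_S. nia. Qed.

Lemma zp_nonneg x n : 0 <= x -> 0 <= zp x n.
Proof. intros H; induction n; [simpl; lia|]. rewrite zp_S. nia. Qed.

Lemma zp_ge1 x n : 1 <= x -> 1 <= zp x n.
Proof. intros H; induction n; [simpl; lia|]. rewrite zp_S. nia. Qed.

Lemma zp_lt x y n : 0 <= x < y -> (1 <= n)%nat -> zp x n < zp y n.
Proof.
  intros H Hn. destruct n as [|n]; [lia|]. clear Hn.
  induction n as [|n IH]. rewrite !zp_S; simpl; lia.
  rewrite (zp_S x (S n)), (zp_S y (S n)).
  assert (0 <= zp x (S n)) by (apply zp_nonneg; lia). nia.
Qed.

Lemma powdiff x y k : (x - y | zp x k - zp y k).
Proof.
  induction k as [|k IH]. simpl. exists 0; ring.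
  rewrite !zp_S. destruct IH as [q Hq].
  exists (x * q + zp y k).
  replace (x * zp x k - y * zp y k) with (x * (zp x k - zp y k) + zp y k * (x - y)) by ring.
  rewrite Hq. ring.
Qed.

Lemma zp_m1_odd k : zp (-1) (2 * k + 1) = -1.
Proof.
  induction k as [|k IH]. reflexivity.
  replace (2 * S k + 1)%nat with (S (S (2 * k + 1))) by lia.
  rewrite !zp_S, IH. ring.
Qed.

Lemma divide_fact x n : (1 <= x <= n)%nat -> Nat.divide x (fact n).
Proof.
  induction n as [|n IH]; intros H. lia.
  destruct (Nat.eq_dec x (S n)) as [->|Hne].
  - exists (fact n). simpl. lia.
  - destruct IH as [q Hq]. lia. exists (q * S n)%nat. simpl. rewrite Hq. lia.
Qed.


Fixpoint dset (K : nat) : nat -> nat :=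
  match K with
  | O => fun _ => 1%nat
  | S K' => fun i => match i with
                     | O => fact (dset K' K')
                     | S i' => (fact (dset K' K') + dset K' i')%nat
                     end
  end.

Lemma fact_ge1 n : (1 <= fact n)%nat.
Proof. pose proof (lt_O_fact n). lia. Qed.

Lemma dset_prop K :
  (forall i, 1 <= dset K i)%nat /\
  (forall i j, i < j <= K -> dset K i < dset K j /\ Nat.divide (dset K j - dset K i) (dset K i))%nat.
Proof.
  induction K as [|K [IH1 IH2]].
  - split. intros; simpl; lia. intros; lia.
  - assert (Hmono : forall i, (i <= K -> dset K i <= dset K K)%nat).
    { intros i Hi. destruct (Nat.eq_dec i K) as [->|]; [lia|].
      destruct (IH2 i K) as [H _]; lia. }
    split.
    + intros [|i]; simpl. apply fact_ge1. pose proof (fact_ge1 (dset K K)); lia.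
    + intros [|i] [|j] Hij; try lia.
      * simpl. pose proof (IH1 j). split; [lia|].
        replace (fact (dset K K) + dset K j - fact (dset K K))%nat with (dset K j) by lia.
        apply divide_fact. split; [apply IH1|]. apply Hmono; lia.
      * simpl. destruct (IH2 i j) as [H1 H2]; [lia|]. split; [lia|].
        replace (fact (dset K K) + dset K j - (fact (dset K K) + dset K i))%nat
          with (dset K j - dset K i)%nat by lia.
        apply Nat.divide_add_r; [|exact H2].
        apply divide_fact. split; [lia|]. pose proof (Hmono j); lia.
Qed.

Lemma dset_le K i : (i <= K -> dset K i <= dset K K)%nat.
Proof.
  intros Hi. destruct (Nat.eq_dec i K) as [->|]; [lia|].
  destruct (proj2 (dset_prop K) i K) as [H _]; lia.
Qed.


Open Scope Z_scope.

Lemma gdiv_lemma (b b1 : Z) (m e : nat) : Nat.divide m e ->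
  (zp b m - zp b1 m | zp b e - zp b1 e).
Proof.
  intros [q ->]. rewrite Nat.mul_comm, !zp_mul. apply powdiff.
Qed.

Lemma PiZ (b : Z) (Hb : 2 <= b) (K : nat) : exists Xz : nat -> Z,
  (forall i, 1 <= Xz i) /\
  forall i j, (i < j <= K)%nat -> exists d w, 1 <= d /\ 0 <= w /\
    Xz i = d * (b * (b - 1) * w + b) /\ Xz j = d * (b * (b - 1) * w + b - 1).
Proof.
  set (b1 := b - 1).
  destruct (dset_prop K) as [Hc1 Hc2].
  set (c := dset K). set (cm := c K). set (L := fact cm).
  assert (HL : (1 <= L)%nat) by apply fact_ge1.
  set (G := zp b L - zp b1 L).
  assert (HG : 1 <= G).
  { unfold G. pose proof (zp_lt b1 b L ltac:(unfold b1; lia) HL). lia. }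
  assert (Hk : (b1 | G - 1)).
  { replace (G - 1) with ((zp b L - zp 1 L) - zp b1 L) by (unfold G; rewrite zp_one; ring).
    apply Z.divide_sub_r. replace b1 with (b - 1) by reflexivity. apply powdiff.
    destruct L as [|L']; [lia|]. rewrite zp_S. apply Z.divide_mul_l, Z.divide_refl. }
  destruct Hk as [k Hk].
  assert (Hk0 : 0 <= k) by (unfold b1 in Hk; nia).
  set (Cc := (2 * cm + 1)%nat).
  set (z := zp k Cc).
  assert (Hz0 : 0 <= z) by (apply zp_nonneg; lia).
  set (u := fun i : nat => 1 + z * zp b (c i) * zp b1 (Cc - c i)).
  assert (Hu1 : forall i, 1 <= u i).
  { intros i. unfold u. pose proof (zp_nonneg b (c i) ltac:(lia)).
    pose proof (zp_nonneg b1 (Cc - c i) ltac:(unfold b1; lia)). nia. }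
  exists (fun i => zp b1 (c i) * zp b (Cc - c i) * u i).
  split.
  { intros i. pose proof (zp_ge1 b1 (c i) ltac:(unfold b1; lia)).
    pose proof (zp_ge1 b (Cc - c i) ltac:(lia)). pose proof (Hu1 i). nia. }
  intros i j Hij.
  assert (HcK : forall t, (t <= K)%nat -> (c t <= cm)%nat) by (intros; apply dset_le; lia).
  destruct (Hc2 i j Hij) as [Hlt Hdiv]. fold c in Hlt, Hdiv.
  set (m := (c j - c i)%nat).
  assert (Hm1 : (1 <= m)%nat) by (unfold m; lia).
  assert (HmL : Nat.divide m L) by (apply divide_fact; pose proof (HcK j ltac:(lia)); unfold m; lia).
  set (gm := zp b m - zp b1 m).
  assert (Hgm : 1 <= gm).
  { unfold gm. pose proof (zp_lt b1 b m ltac:(unfold b1; lia) Hm1). lia. }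
  assert (HGdiv : (G | zp (G - 1) Cc + 1)).
  { pose proof (powdiff (G - 1) (-1) Cc) as H.
    unfold Cc in H at 2. rewrite zp_m1_odd in H.
    replace (G - 1 - -1) with G in H by ring. replace (zp (G - 1) Cc + 1) with (zp (G - 1) Cc - -1) by ring.
    exact H. }
  assert (Hzb : z * zp b1 Cc = zp (G - 1) Cc).
  { unfold z. rewrite <- zp_mult. rewrite Hk. reflexivity. }
  assert (HgG : (gm | G)) by (apply gdiv_lemma; exact HmL).
  assert (Hue : forall e, Nat.divide m e -> (e <= Cc)%nat ->
            (gm | 1 + z * zp b e * zp b1 (Cc - e))).
  { intros e He HeC. destruct (gdiv_lemma b b1 m e He) as [t Ht]. fold gm in Ht.
    assert (Hsplit : zp b1 e * zp b1 (Cc - e) = zp b1 Cc).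
    { rewrite <- zp_add. f_equal. lia. }
    replace (1 + z * zp b e * zp b1 (Cc - e)) with
      ((1 + z * zp b1 Cc) + gm * (t * z * zp b1 (Cc - e))).
    2:{ rewrite <- Hsplit. replace (zp b e) with (zp b1 e + t * gm) by lia. ring. }
    apply Z.divide_add_r; [|apply Z.divide_mul_l, Z.divide_refl].
    rewrite Hzb. eapply Z.divide_trans; [exact HgG|]. rewrite Z.add_comm. exact HGdiv. }
  assert (HcjC : (c j <= Cc)%nat) by (pose proof (HcK j ltac:(lia)); unfold Cc; lia).
  assert (Hdj : Nat.divide m (c j)).
  { replace (c j) with (c i + m)%nat by (unfold m; lia). apply Nat.divide_add_r; [exact Hdiv|apply Nat.divide_refl]. }
  destruct (Hue (c i) Hdiv ltac:(lia)) as [p Hp].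
  destruct (Hue (c j) Hdj HcjC) as [p' Hp'].
  fold (u i) in Hp. fold (u j) in Hp'.
  assert (Hid : zp b m * u i - zp b1 m * u j = gm).
  { unfold u, gm; cbv beta.
    assert (E1 : zp b m * zp b (c i) = zp b (c j)) by (rewrite <- zp_add; f_equal; unfold m; lia).
    assert (E2 : zp b1 m * zp b1 (Cc - c j) = zp b1 (Cc - c i)) by (rewrite <- zp_add; f_equal; unfold m; lia).
    transitivity (zp b m - zp b1 m + z * (zp b m * zp b (c i)) * zp b1 (Cc - c i)
       - z * zp b (c j) * (zp b1 m * zp b1 (Cc - c j))); [ring|].
    rewrite E1, E2. ring. }
  assert (Hpp : zp b m * p - zp b1 m * p' = 1).
  { rewrite Hp, Hp' in Hid. 
    assert (gm * (zp b m * p - zp b1 m * p') = gm * 1) by (transitivity (zp b m * (gm * p) - zp b1 m * (gm * p')); [ring | lia]).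
    apply Z.mul_reg_l in H; lia. }
  set (P := zp b m * p).
  assert (HpP : 0 < p) by (pose proof (Hu1 i); nia).
  assert (HPpos : 0 < P) by (unfold P; pose proof (zp_pos b m ltac:(lia)); nia).
  assert (HbP : (b | P)).
  { unfold P. destruct m as [|m']; [lia|]. rewrite zp_S. apply Z.divide_mul_l, Z.divide_mul_l, Z.divide_refl. }
  assert (Hb1P : (b1 | P - 1)).
  { replace (P - 1) with (zp b1 m * p') by (unfold P; lia).
    destruct m as [|m']; [lia|]. rewrite zp_S. apply Z.divide_mul_l, Z.divide_mul_l, Z.divide_refl. }
  destruct HbP as [y Hy].
  assert (Hy1 : (b1 | y - 1)).
  { assert (H : (b1 | b1 * y - b1 + (y - 1))).
    { replace (b1 * y - b1 + (y - 1)) with (P - 1 - b1) by (rewrite Hy; unfold b1; ring).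
      apply Z.divide_sub_r; [exact Hb1P| apply Z.divide_refl]. }
    apply (Z.divide_add_cancel_r b1 (b1 * y - b1)); [exists (y - 1); ring | exact H]. }
  destruct Hy1 as [w Hw].
  exists (zp b1 (c i) * zp b (Cc - c j) * gm), w.
  assert (Hb1c : 1 <= zp b1 (c i)) by (apply zp_ge1; unfold b1; lia).
  assert (Hbc : 1 <= zp b (Cc - c j)) by (apply zp_ge1; lia).
  assert (HPw : P = b * b1 * w + b) by (rewrite Hy; replace y with (w * b1 + 1) by lia; ring).
  split; [nia|]. split.
  { destruct (Z_lt_le_dec w 0); [|lia]. exfalso. nia. }
  assert (E3 : zp b (Cc - c i) = zp b (Cc - c j) * zp b m) by (rewrite <- zp_add; f_equal; unfold m; lia).
  assert (E4 : zp b1 (c j) = zp b1 (c i) * zp b1 m) by (rewrite <- zp_add; f_equal; unfold m; lia).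
  split.
  - rewrite <- HPw. unfold P. rewrite E3, Hp. ring.
  - replace (b * b1 * w + b - 1) with (zp b1 m * p') by (rewrite <- HPw; unfold P; lia).
    rewrite E4, Hp'. ring.
Qed.


Open Scope nat_scope.

Lemma choice2 (P : nat -> nat -> nat -> nat -> Prop) :
  (forall i j, exists d s, P i j d s) -> exists D S : nat -> nat -> nat, forall i j, P i j (D i j) (S i j).
Proof.
  intros H.
  exists (fun i j => proj1_sig (constructive_indefinite_description _ (H i j))).
  exists (fun i j => proj1_sig (constructive_indefinite_description _
            (proj2_sig (constructive_indefinite_description _ (H i j))))).
  intros i j. cbv beta.
  destruct (constructive_indefinite_description _ (H i j)) as [d Hd]. simpl.
  destruct (constructive_indefinite_description _ Hd) as [s Hs]. simpl. exact Hs.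
Qed.

Lemma finite_bound (f : nat -> nat) K : exists B, forall i, i <= K -> f i <= B.
Proof.
  induction K as [|K [B HB]].
  - exists (f 0). intros i Hi. replace i with 0 by lia. lia.
  - exists (Nat.max B (f (S K))). intros i Hi.
    destruct (Nat.eq_dec i (S K)) as [->|]. lia. specialize (HB i ltac:(lia)). lia.
Qed.

Lemma PiN (b : nat) (Hb : 2 <= b) (K : nat) : exists (X : nat -> nat) (D S : nat -> nat -> nat) (Bm : nat),
  (forall i, 1 <= X i) /\ (forall i, i <= K -> X i <= Bm) /\
  forall i j, i < j <= K -> 1 <= D i j /\ X i = D i j * (b * (b - 1) * S i j + b) /\
                            X j = D i j * (b * (b - 1) * S i j + b - 1).
Proof.
  destruct (PiZ (Z.of_nat b) ltac:(lia) K) as [Xz [HX1 HX2]].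
  assert (H : forall i j, exists d s, i < j <= K -> 1 <= d /\ Z.to_nat (Xz i) = d * (b * (b - 1) * s + b) /\
                            Z.to_nat (Xz j) = d * (b * (b - 1) * s + b - 1)).
  { intros i j. destruct (Nat.lt_ge_cases i j) as [Hij|Hij]; [destruct (Nat.le_gt_cases j K) as [HjK|HjK]|].
    2,3: exists 0, 0; lia.
    destruct (HX2 i j ltac:(lia)) as [d [w [Hd [Hw [E1 E2]]]]].
    exists (Z.to_nat d), (Z.to_nat w). intros _.
    split; [lia|]. split.
    - apply Nat2Z.inj. rewrite Z2Nat.id by (specialize (HX1 i); lia). rewrite E1.
      rewrite Nat2Z.inj_mul, Nat2Z.inj_add, !Nat2Z.inj_mul, Nat2Z.inj_sub by lia.
      rewrite !Z2Nat.id by lia. ring.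
    - apply Nat2Z.inj. rewrite Z2Nat.id by (specialize (HX1 j); lia). rewrite E2.
      rewrite Nat2Z.inj_mul, Nat2Z.inj_sub, Nat2Z.inj_add, !Nat2Z.inj_mul, Nat2Z.inj_sub by nia.
      rewrite !Z2Nat.id by lia. ring. }
  destruct (choice2 _ H) as [D [S HDS]].
  destruct (finite_bound (fun i => Z.to_nat (Xz i)) K) as [Bm HBm].
  exists (fun i => Z.to_nat (Xz i)), D, S, Bm.
  split; [intros i; specialize (HX1 i); lia|]. split; [exact HBm|].
  intros i j Hij. apply HDS; exact Hij.
Qed.


Open Scope R_scope.

Lemma pigeonhole (M : nat) : forall h : nat -> nat, (forall i, (i <= M)%nat -> (h i < M)%nat) ->
  exists i j, (i < j <= M)%nat /\ h i = h j.
Proof.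
  induction M as [|M IH]; intros h Hh.
  - specialize (Hh 0%nat ltac:(lia)). lia.
  - destruct (Classical_Prop.classic (exists i, (i <= M)%nat /\ h i = h (S M))) as [[i [Hi Heq]]|Hno].
    + exists i, (S M). split; [lia|exact Heq].
    + set (v := h (S M)).
      set (h' := fun i => if Nat.ltb (h i) v then h i else (h i - 1)%nat).
      destruct (IH h') as [i [j [Hij Heq]]].
      { intros i Hi. unfold h'. pose proof (Hh i ltac:(lia)) as Hhi. pose proof (Hh (S M) (le_n _)) as HhM.
        fold v in HhM. destruct (Nat.ltb_spec (h i) v); [lia|].
        assert (h i <> v) by (intro; apply Hno; exists i; split; [lia|auto]). lia. }
      exists i, j. split; [lia|]. unfold h' in Heq.
      assert (h i <> v) by (intro; apply Hno; exists i; split; [lia|auto]).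
      assert (h j <> v) by (intro; apply Hno; exists j; split; [lia|auto]).
      destruct (Nat.ltb_spec (h i) v), (Nat.ltb_spec (h j) v); lia.
Qed.

Fixpoint enc (E : nat) (e : nat -> nat) (n : nat) : nat :=
  match n with
  | O => O
  | S n' => (e O + E * enc E (fun j => e (S j)) n')%nat
  end.

Lemma enc_bound E n : forall e, (forall j, (j < n)%nat -> (e j < E)%nat) -> (enc E e n < E ^ n)%nat.
Proof.
  induction n as [|n IH]; intros e He; simpl. lia.
  specialize (IH (fun j => e (S j)) ltac:(intros j Hj; apply He; lia)).
  pose proof (He 0%nat ltac:(lia)). nia.
Qed.

Lemma divmod_uniq (E x y x' y' : nat) : (x < E)%nat -> (x' < E)%nat -> (x + E * y = x' + E * y')%nat -> x = x' /\ y = y'.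
Proof.
  intros Hx Hx' H.
  assert (y = y').
  { destruct (Nat.lt_trichotomy y y') as [Hl|[Hl|Hl]]; [|exact Hl|]; exfalso; nia. }
  subst; lia.
Qed.

Lemma enc_inj E n : forall e e', (forall j, (j < n)%nat -> (e j < E)%nat) -> (forall j, (j < n)%nat -> (e' j < E)%nat) ->
  enc E e n = enc E e' n -> forall j, (j < n)%nat -> e j = e' j.
Proof.
  induction n as [|n IH]; intros e e' He He' Heq j Hj; simpl in *. lia.
  destruct (divmod_uniq E _ _ _ _ (He 0%nat ltac:(lia)) (He' 0%nat ltac:(lia)) Heq) as [H0 H1].
  destruct j as [|j]; [exact H0|].
  apply (IH (fun j => e (S j)) (fun j => e' (S j))); [intros k Hk; apply He; lia | intros k Hk; apply He'; lia | exact H1 | lia].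
Qed.

Definition cellR (dl x : R) : nat := Z.to_nat (up ((x + 1) / dl)).

Lemma cell_bound dl x : 0 < dl -> -1 <= x <= 1 -> (cellR dl x < Z.to_nat (up (2 / dl + 1)))%nat.
Proof.
  intros Hd Hx. unfold cellR.
  destruct (archimed ((x + 1) / dl)) as [A1 A2].
  destruct (archimed (2 / dl + 1)) as [B1 B2].
  assert (0 <= (x + 1) / dl) by (apply Rdiv_le_0_compat; lra).
  assert ((x + 1) / dl <= 2 / dl) by (apply Rmult_le_compat_r; [left; apply Rinv_0_lt_compat; lra| lra]).
  assert (H1 : (0 < up ((x + 1) / dl))%Z) by (apply lt_IZR; simpl; lra).
  assert (H2 : (up ((x + 1) / dl) < up (2 / dl + 1))%Z) by (apply lt_IZR; lra).
  lia.
Qed.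

Lemma cell_close dl x y : 0 < dl -> -1 <= x -> -1 <= y -> cellR dl x = cellR dl y -> Rabs (x - y) < dl.
Proof.
  intros Hd Hx Hy Heq. unfold cellR in Heq.
  destruct (archimed ((x + 1) / dl)) as [A1 A2].
  destruct (archimed ((y + 1) / dl)) as [B1 B2].
  assert (0 <= (x + 1) / dl) by (apply Rdiv_le_0_compat; lra).
  assert (0 <= (y + 1) / dl) by (apply Rdiv_le_0_compat; lra).
  assert (H1 : (0 < up ((x + 1) / dl))%Z) by (apply lt_IZR; simpl; lra).
  assert (H2 : (0 < up ((y + 1) / dl))%Z) by (apply lt_IZR; simpl; lra).
  assert (Hu : up ((x + 1) / dl) = up ((y + 1) / dl)) by lia.
  rewrite Hu in A1, A2.
  set (X' := (x + 1) / dl) in *. set (Y' := (y + 1) / dl) in *.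
  assert (Ex : x = X' * dl - 1) by (unfold X'; field; lra).
  assert (Ey : y = Y' * dl - 1) by (unfold Y'; field; lra).
  assert (-1 < X' - Y' < 1) by lra.
  apply Rabs_def1; rewrite Ex, Ey; nra.
Qed.

Lemma sqrt2_lt2 : sqrt 2 < 2.
Proof.
  pose proof (sqrt_sqrt 2 ltac:(lra)). pose proof (sqrt_pos 2). nra.
Qed.

Lemma cell_pigeon (r : nat) (eps : R) : 0 < eps -> exists K : nat, forall V : nat -> nat -> C,
  (forall i j, (j < r)%nat -> Cmod (V i j) = 1) ->
  exists i i', (i < i' <= K)%nat /\ forall j, (j < r)%nat -> Cmod (Cminus (V i j) (V i' j)) < eps.
Proof.
  intros Heps. set (dl := eps / 2). assert (Hdl : 0 < dl) by (unfold dl; lra).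
  set (Bc := Z.to_nat (up (2 / dl + 1))). set (E := (Bc * Bc)%nat).
  exists (E ^ r)%nat. intros V HV.
  assert (Hb : forall i j, (j < r)%nat -> -1 <= fst (V i j) <= 1 /\ -1 <= snd (V i j) <= 1).
  { intros i j Hj. pose proof (Rmax_Cmod (V i j)). rewrite HV in H by exact Hj.
    pose proof (Rmax_l (Rabs (fst (V i j))) (Rabs (snd (V i j)))).
    pose proof (Rmax_r (Rabs (fst (V i j))) (Rabs (snd (V i j)))).
    split; apply Rabs_le_between; lra. }
  set (dig := fun i j => (cellR dl (fst (V i j)) + Bc * cellR dl (snd (V i j)))%nat).
  assert (Hdig : forall i j, (j < r)%nat -> (dig i j < E)%nat).
  { intros i j Hj. destruct (Hb i j Hj). unfold dig, E.
    pose proof (cell_bound dl _ Hdl H) as C1. pose proof (cell_bound dl _ Hdl H0) as C2. fold Bc in C1, C2. nia. }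
  destruct (pigeonhole (E ^ r) (fun i => enc E (dig i) r)) as [i [i' [Hii Heq]]].
  { intros i _. apply enc_bound. apply Hdig. }
  exists i, i'. split; [exact Hii|]. intros j Hj.
  pose proof (enc_inj E r (dig i) (dig i') (Hdig i) (Hdig i') Heq j Hj) as Hd.
  unfold dig in Hd. destruct (Hb i j Hj) as [Hi1 Hi2]. destruct (Hb i' j Hj) as [Hi1' Hi2'].
  destruct (divmod_uniq Bc _ _ _ _ (cell_bound dl _ Hdl Hi1) (cell_bound dl _ Hdl Hi1') Hd) as [Hre Him].
  pose proof (cell_close dl (fst (V i j)) (fst (V i' j)) Hdl ltac:(lra) ltac:(lra) Hre).
  pose proof (cell_close dl (snd (V i j)) (snd (V i' j)) Hdl ltac:(lra) ltac:(lra) Him).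
  eapply Rle_lt_trans; [apply Cmod_2Rmax|]. simpl.
  assert (Rmax (Rabs (fst (V i j) + - fst (V i' j))) (Rabs (snd (V i j) + - snd (V i' j))) < dl).
  { apply Rmax_lub_lt; assumption. }
  pose proof sqrt2_lt2. pose proof (sqrt_pos 2). unfold dl in *. nra.
Qed.


Open Scope R_scope.

Lemma indic_01 P n : 0 <= indic P n <= 1.
Proof. unfold indic. destruct (excluded_middle_informative (P n)); lra. Qed.

Lemma indic_1 P n : P n -> indic P n = 1.
Proof. intros H. unfold indic. destruct (excluded_middle_informative (P n)); [lra|contradiction]. Qed.

Lemma indic_0 P n : ~ P n -> indic P n = 0.
Proof. intros H. unfold indic. destruct (excluded_middle_informative (P n)); [contradiction|lra]. Qed.

Lemma count_nonneg P N : 0 <= count_upto P N.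
Proof. induction N; simpl. lra. pose proof (indic_01 P (S N)); lra. Qed.

Lemma count_mono P N M : (N <= M)%nat -> count_upto P N <= count_upto P M.
Proof.
  intros H. induction H. lra. simpl. pose proof (indic_01 P (S m)); lra.
Qed.

Lemma count_zero P N : (forall k, ~ P k) -> count_upto P N = 0.
Proof. intros H. induction N; simpl. lra. rewrite IHN, indic_0 by apply H. lra. Qed.

Lemma count_incr (A G : nat -> Prop) (g : nat -> nat) :
  (forall k, (g k < g (S k))%nat) -> (forall k, (1 <= k)%nat -> A k -> G (g k)) ->
  forall X, count_upto A X <= count_upto G (g X).
Proof.
  intros Hg HAG X. induction X as [|X IH].
  - simpl. apply count_nonneg.
  - simpl. destruct (Classical_Prop.classic (A (S X))) as [HA|HA].
    + rewrite indic_1 by exact HA.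
      pose proof (Hg X). destruct (g (S X)) as [|m] eqn:E; [lia|].
      simpl. rewrite indic_1 by (rewrite <- E; apply HAG; [lia|exact HA]).
      pose proof (count_mono G (g X) m ltac:(lia)). lra.
    + rewrite indic_0 by exact HA.
      pose proof (count_mono G (g X) (g (S X)) ltac:(pose proof (Hg X); lia)). lra.
Qed.

Fixpoint sumN (f : nat -> R) (Q : nat) : R :=
  match Q with O => 0 | S q => sumN f q + f q end.

Lemma sumN_plus f g Q : sumN (fun p => f p + g p) Q = sumN f Q + sumN g Q.
Proof. induction Q; simpl. lra. rewrite IHQ. lra. Qed.

Lemma sumN_nonneg f Q : (forall p, 0 <= f p) -> 0 <= sumN f Q.
Proof. intros H; induction Q; simpl. lra. pose proof (H Q); lra. Qed.

Lemma sumN_ge1 f Q p0 : (forall p, 0 <= f p) -> (p0 < Q)%nat -> 1 <= f p0 -> 1 <= sumN f Q.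
Proof.
  intros H Hp H1. induction Q as [|Q IH]; [lia|]. simpl.
  destruct (Nat.eq_dec p0 Q) as [->|Hne].
  - pose proof (sumN_nonneg f Q H); lra.
  - pose proof (H Q). specialize (IH ltac:(lia)). lra.
Qed.

Lemma sumN_lt f Q c : (0 < Q)%nat -> (forall p, (p < Q)%nat -> f p < c) -> sumN f Q < INR Q * c.
Proof.
  intros HQ H. induction Q as [|Q IH]; [lia|]. simpl sumN. rewrite S_INR.
  destruct Q as [|Q].
  - simpl. pose proof (H 0%nat ltac:(lia)). lra.
  - specialize (IH ltac:(lia) ltac:(intros; apply H; lia)). pose proof (H (S Q) ltac:(lia)). lra.
Qed.

Lemma avg_exists f Q x : (0 < Q)%nat -> x <= sumN f Q -> exists p, (p < Q)%nat /\ x / INR Q <= f p.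
Proof.
  intros HQ Hx. apply Classical_Prop.NNPP. intros Hn.
  assert (forall p, (p < Q)%nat -> f p < x / INR Q).
  { intros p Hp. apply Rnot_le_lt. intro Hle. apply Hn. exists p. auto. }
  pose proof (sumN_lt f Q (x / INR Q) HQ H).
  assert (INR Q * (x / INR Q) = x) by (field; apply not_0_INR; lia). lra.
Qed.

Lemma cover (A : nat -> nat -> Prop) Q : (forall n, (1 <= n)%nat -> exists p, (p < Q)%nat /\ A p n) ->
  forall X, INR X <= sumN (fun p => count_upto (A p) X) Q.
Proof.
  intros H X. induction X as [|X IH].
  - simpl. apply sumN_nonneg. intros; lra.
  - rewrite S_INR. simpl count_upto. rewrite sumN_plus.
    destruct (H (S X) ltac:(lia)) as [p0 [Hp0 HA]].
    pose proof (sumN_ge1 (fun p => indic (A p) (S X)) Q p0 ltac:(intros; apply indic_01) Hp0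
       ltac:(cbv beta; rewrite indic_1 by exact HA; lra)). lra.
Qed.


Open Scope R_scope.

Lemma unit_conj (B : C) : Cmod B = 1 -> Cmult B (Cconj B) = 1%C.
Proof. intros H. rewrite <- Cmod2_conj, H. unfold RtoC. f_equal; simpl; ring. Qed.

Lemma key (F : nat -> C) (a b d s k P X Y n : nat) :
  completely_multiplicative F -> unit_circle_valued F -> (1 <= d)%nat -> (2 <= b)%nat ->
  a = (b * (b - 1))%nat -> P = (a * s + b)%nat -> X = (d * P)%nat -> Y = (d * (P - 1))%nat ->
  n = (P * k * Y + s)%nat ->
  Cmod (Cminus (F (a * n + b)%nat) (F (a * n + b - 1)%nat)) =
  Cmod (Cminus (Cmult (F X) (Cconj (F (a * k * X + 1)%nat))) (Cmult (F Y) (Cconj (F (a * k * Y + 1)%nat)))).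
Proof.
  intros Hm Hu Hd Hb Ha HP HX HY Hn.
  assert (E1 : (a * n + b = P * (a * k * Y + 1))%nat).
  { rewrite Hn. lia. }
  assert (HP1 : (1 <= P - 1)%nat) by (subst; nia).
  assert (E2 : (a * n + b - 1 = (P - 1) * (a * k * X + 1))%nat).
  { rewrite E1. rewrite HX, HY. remember (P - 1)%nat as q. replace P with (q + 1)%nat by lia.
    assert (Hr : ((q + 1) * (a * k * (d * q) + 1) = q * (a * k * (d * (q + 1)) + 1) + 1)%nat) by ring.
    rewrite Hr. lia. }
  rewrite E2, E1.
  rewrite (Hm P) by lia. rewrite (Hm (P - 1)%nat) by lia.
  set (A := F (a * k * Y + 1)%nat). set (B := F (a * k * X + 1)%nat).
  rewrite HX, HY. rewrite (Hm d P) by lia. rewrite (Hm d (P - 1)%nat) by lia.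
  assert (HA : Cmod A = 1) by (apply Hu; lia).
  assert (HB : Cmod B = 1) by (apply Hu; lia).
  assert (HF : Cmod (F d) = 1) by (apply Hu; lia).
  assert (Eq : Cmult (Cminus (Cmult (Cmult (F d) (F P)) (Cconj B)) (Cmult (Cmult (F d) (F (P - 1)%nat)) (Cconj A))) (Cmult A B)
             = Cmult (F d) (Cminus (Cmult (F P) A) (Cmult (F (P - 1)%nat) B))).
  { pose proof (unit_conj A HA) as UA. pose proof (unit_conj B HB) as UB.
    transitivity (Cminus (Cmult (Cmult (F d) (F P)) (Cmult A (Cmult B (Cconj B))))
                         (Cmult (Cmult (F d) (F (P-1)%nat)) (Cmult B (Cmult A (Cconj A))))); [ring|].
    rewrite UA, UB. ring. }
  apply (f_equal Cmod) in Eq. rewrite !Cmod_mult, HA, HB, HF in Eq. lra.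
Qed.


Open Scope R_scope.
Open Scope R_scope.

Lemma pair_dec i i' K : (i' < K + 1)%nat ->
  ((i * (K + 1) + i') / (K + 1) = i)%nat /\ ((i * (K + 1) + i') mod (K + 1) = i')%nat.
Proof.
  intros H. split.
  - rewrite Nat.div_add_l by lia. rewrite Nat.div_small by lia. lia.
  - rewrite Nat.add_comm, Nat.Div0.mod_add. apply Nat.mod_small; lia.
Qed.

Theorem proposition5p1 (r a b : nat) :
  (1 <= r)%nat -> (2 <= b)%nat -> a = (b * (b - 1))%nat ->
  forall (eps : R), 0 < eps ->
  forall f : nat -> nat -> C,
    (forall j, (j < r)%nat -> completely_multiplicative (f j) /\ unit_circle_valued (f j)) ->
    Rbar_lt (Finite 0)
      (lower_density (fun n : nat => (1 <= n)%nat /\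
         forall j, (j < r)%nat ->
           Cmod (Cminus (f j (a * n + b)%nat) (f j (a * n + b - 1)%nat)) < eps)).
Proof.
  intros Hr Hb Ha eps Heps f Hf.
  match goal with |- Rbar_lt _ (lower_density ?G) => set (Gd := G) end.
  destruct (cell_pigeon r eps Heps) as [K HK].
  destruct (PiN b Hb K) as [X [D [Sf [Bm [HX1 [HXB HDS]]]]]].
  rewrite <- Ha in HDS.
  set (Q := ((K + 1) * (K + 1))%nat).
  set (pi := fun p => (p / (K + 1))%nat). set (pj := fun p => (p mod (K + 1))%nat).
  set (Pp := fun p => (a * Sf (pi p) (pj p) + b)%nat).
  set (g := fun p k => (Pp p * k * X (pj p) + Sf (pi p) (pj p))%nat).
  set (A := fun p k => (pi p < pj p <= K)%nat /\ Gd (g p k)).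
  assert (HGd : forall p k, (1 <= k)%nat -> (pi p < pj p <= K)%nat -> Gd (g p k) \/ ~ Gd (g p k)) by (intros; tauto).
  assert (Hcov : forall k, (1 <= k)%nat -> exists p, (p < Q)%nat /\ A p k).
  { intros k Hk.
    set (V := fun i j => Cmult (f j (X i)) (Cconj (f j (a * k * X i + 1)%nat))).
    destruct (HK V) as [i [i' [Hii Hclose]]].
    { intros i j Hj. unfold V. destruct (Hf j Hj) as [_ Hu].
      rewrite Cmod_mult, Cmod_conj, !Hu. lra. pose proof (HX1 i); lia. apply HX1. }
    exists (i * (K + 1) + i')%nat.
    destruct (pair_dec i i' K ltac:(lia)) as [E1 E2].
    split; [unfold Q; nia|].
    unfold A, pi, pj. rewrite E1, E2. split; [lia|].
    unfold g, Pp, pi, pj. rewrite E1, E2.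
    destruct (HDS i i' Hii) as [HD [HXi HXi']].
    split. { pose proof (HX1 i'). nia. }
    intros j Hj. destruct (Hf j Hj) as [Hm Hu].
    rewrite (key (f j) a b (D i i') (Sf i i') k (a * Sf i i' + b)%nat (X i) (X i') _ Hm Hu HD Hb Ha eq_refl HXi HXi' eq_refl).
    apply Hclose. exact Hj. }
  set (C0 := (Bm * Bm + Bm)%nat).
  assert (HBm : (1 <= Bm)%nat) by (pose proof (HX1 0%nat); pose proof (HXB 0%nat ltac:(lia)); lia).
  assert (HQ : (0 < Q)%nat) by (unfold Q; nia).
  assert (Hcnt : forall Xn, (1 <= Xn)%nat -> INR Xn / INR Q <= count_upto Gd (C0 * Xn)).
  { intros Xn HXn.
    pose proof (cover A Q Hcov Xn) as Hs.
    destruct (avg_exists _ Q _ HQ Hs) as [p [Hp Hc]].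
    assert (Hpos : 0 < INR Xn / INR Q).
    { apply Rdiv_lt_0_compat; apply lt_0_INR; lia. }
    assert (Hex : exists k, A p k).
    { apply Classical_Prop.NNPP. intro Hn. rewrite count_zero in Hc. lra.
      intros k Hk. apply Hn. exists k. exact Hk. }
    destruct Hex as [k0 [Hv _]].
    destruct (HDS (pi p) (pj p) Hv) as [HD [HXi HXi']].
    assert (Hinc : forall k, (g p k < g p (S k))%nat).
    { intros k. unfold g, Pp. pose proof (HX1 (pj p)). nia. }
    pose proof (count_incr (A p) Gd (g p) Hinc ltac:(intros k _ [_ H]; exact H) Xn) as H1.
    assert (Hg : (g p Xn <= C0 * Xn)%nat).
    { unfold g, C0. fold (Pp p) in HXi.
      pose proof (HXB (pi p) ltac:(lia)). pose proof (HXB (pj p) ltac:(lia)).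
      assert (Pp p <= Bm)%nat by nia.
      assert (Sf (pi p) (pj p) <= Bm)%nat by (unfold Pp in *; nia).
      assert (Pp p * Xn * X (pj p) <= Bm * Xn * Bm)%nat.
      { apply Nat.mul_le_mono; [apply Nat.mul_le_mono_r|]; lia. }
      nia. }
    pose proof (count_mono Gd _ _ Hg). lra. }
  assert (HC0 : (2 <= C0)%nat) by (unfold C0; nia).
  set (c := 1 / (2 * INR C0 * INR Q)).
  assert (Hc0 : 0 < c).
  { unfold c. apply Rdiv_lt_0_compat; [lra|]. pose proof (lt_0_INR C0 ltac:(lia)). pose proof (lt_0_INR Q HQ). nra. }
  assert (Hev : eventually (fun N => c <= count_upto Gd N / INR N)).
  { exists (2 * C0)%nat. intros N HN.
    set (Xn := (N / C0)%nat).
    assert (HX2 : (2 <= Xn)%nat).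
    { unfold Xn. apply Nat.div_le_lower_bound; lia. }
    assert (Hle : (C0 * Xn <= N)%nat) by (apply Nat.Div0.mul_div_le).
    assert (Hlt : (N < C0 * (Xn + 1))%nat).
    { pose proof (Nat.div_mod N C0 ltac:(lia)). pose proof (Nat.mod_upper_bound N C0 ltac:(lia)). fold Xn in H. nia. }
    pose proof (Hcnt Xn ltac:(lia)) as H1.
    pose proof (count_mono Gd _ _ Hle) as H2.
    apply le_INR in HN. apply lt_INR in Hlt. rewrite mult_INR in HN, Hlt. rewrite plus_INR in Hlt. simpl INR in HN, Hlt.
    set (n := INR N) in *. set (c0 := INR C0) in *. set (x := INR Xn) in *. set (q := INR Q) in *.
    assert (Hc0p : 0 < c0) by (apply lt_0_INR; lia).
    assert (Hqp : 0 < q) by (apply lt_0_INR; lia).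
    assert (Hnp : 0 < n) by lra.
    assert (Hx : n <= 2 * c0 * x) by nra.
    apply (Rle_div_r c (count_upto Gd N) n Hnp).
    apply Rle_trans with (x / q); [|lra].
    apply (Rle_div_r (c * n) x q Hqp). unfold c.
    replace (1 / (2 * c0 * q) * n * q) with (n / (2 * c0)) by (field; lra).
    apply (Rle_div_l n x (2 * c0) ltac:(lra)). lra. }
  apply LimInf_le in Hev. rewrite LimInf_seq_const in Hev.
  unfold lower_density. destruct (LimInf_seq (fun N => count_upto Gd N / INR N)); simpl in *; auto; lra.
Qed.
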